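(* Let $d\ge3$ and let $C$ be a $d$-dimensional Archimedean copula with Williamson measure $\gamma$. Then $C$ is strict if and only if $0$ lies in the support of $\gamma$, i.e. if and only if $\gamma([0,r))>0$ for every $r>0$.
   Context: An Archimedean generator is a continuous non-increasing $\psi:[0,\infty)\to[0,1]$ with $\psi(0)=1$, $\lim_{z\to\infty}\psi(z)=0$, strictly decreasing on $[0,\inf\{z:\psi(z)=0\}]$, normalized by $\psi(1)=1/2$; pseudo-inverse $\varphi(y)=\inf\{z\in[0,\infty]:\psi(z)=y\}$. $C(\mathbf{u})=\psi(\sum_{i=1}^d\varphi(u_i))$ is a $d$-dimensional Archimedean copula iff $(-1)^{d-2}\psi^{(d-2)}$ exists on $(0,\infty)$ and is non-negative, non-increasing and convex. $C$ (and $\psi$) is strict if $\varphi(0)=\infty$. The Williamson measure of $\psi$ is the unique probability measure $\gamma$ on $\mathcal{B}([0,\infty))$ with $\gamma(\{0\})=0$ and $\psi(z)=\int_{[0,\infty)}(1-tz)_+^{d-1}\,d\gamma(t)$ for all $z>0$. *)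

(* Defs.v *)
From HB Require Import structures.
From mathcomp Require Import all_boot all_order all_algebra.
From mathcomp Require Import all_classical all_reals all_analysis.
Set Implicit Arguments. Unset Strict Implicit. Unset Printing Implicit Defensive.
Import Order.TTheory GRing.Theory Num.Theory.
Import numFieldNormedType.Exports.
Local Open Scope classical_set_scope.
Local Open Scope ring_scope.

Section Arch.
Context {R : realType}.

(* pseudo-inverse phi(y) = inf { z in [0,oo] : psi z = y }, with the
   convention psi(+oo) = 0 (lim_{z->oo} psi z = 0), so +oo belongs to the
   set exactly when y = 0. *)
Definition pinv (psi : R -> R) (y : R) : \bar R :=
  ereal_inf ([set (z%:E)%E | z in [set z : R | 0 <= z /\ psi z = y]]
             `|` [set (+oo)%E | _ in [set _ : unit | y = 0]]).

Definition arch_generator (psi : R -> R) : Prop :=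
  [/\ {within `[0, +oo[, continuous psi},
      (forall z, 0 <= z -> 0 <= psi z <= 1),
      psi 0 = 1 &
      psi @ +oo --> 0] /\
  [/\
      (forall x y, 0 <= x -> x <= y -> psi y <= psi x),
      (forall x y, 0 <= x -> x < y -> (y%:E <= pinv psi 0)%E -> psi y < psi x)
    & psi 1 = 2^-1].

(* C = psi(sum phi(u_i)) is a d-dimensional Archimedean copula:
   (-1)^(d-2) psi^(d-2) exists on (0,oo) and is non-negative,
   non-increasing and convex there. *)
Definition arch_copula (d : nat) (psi : R -> R) : Prop :=
  arch_generator psi /\
  let g := fun x => (-1) ^+ (d - 2) * (derive1n (d - 2) psi) x in
  [/\ (forall k, (k < d - 2)%N -> forall x, 0 < x ->
          derivable (derive1n k psi) x 1),
      (forall x, 0 < x -> 0 <= g x),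
      (forall x y, 0 < x -> x <= y -> g y <= g x)
    & (forall x y t, 0 < x -> 0 < y -> 0 <= t <= 1 ->
          g (t * x + (1 - t) * y) <= t * g x + (1 - t) * g y)].

Definition strict_gen (psi : R -> R) : Prop := pinv psi 0 = (+oo)%E.

(* Williamson measure of psi (d-dimensional): a probability measure on the
   Borel sets of [0,oo) (represented as a probability on R giving full mass
   to [0,oo)), with no atom at 0, and
   psi z = \int (1 - t z)_+^(d-1) dgamma(t) for z > 0. *)
Definition williamson_measure (d : nat) (psi : R -> R)
    (gamma : probability R R) : Prop :=
  [/\ gamma [set` `[0, +oo[] = 1%E,
      gamma [set 0] = 0%E
    & forall z : R, 0 < z ->
        (psi z)%:E = (\int[gamma]_(t in [set` `[0%R, +oo[]) (Num.max (1 - t * z) 0 ^+ (d - 1))%:E)%E].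

End Arch.

(* Main.v *)
Require Import Defs.
From HB Require Import structures.
From mathcomp Require Import all_boot all_order all_algebra.
From mathcomp Require Import all_classical all_reals all_analysis.
From mathcomp Require Import measurable_realfun.
From mathcomp Require Import ring lra.
Import Order.TTheory GRing.Theory Num.Theory.
Local Open Scope classical_set_scope.
Local Open Scope ring_scope.

Lemma mF (R : realType) (z : R) n (D : set R) :
  measurable_fun D (fun t : R => ((Num.max (1 - t * z) 0 ^+ n)%:E : \bar R)).
Proof.
apply/measurable_EFinP; apply: measurable_funX.
have h1 : measurable_fun D (fun t : R => 1 - t * z).
  apply: measurable_funB; first exact: measurable_cst.
  apply: measurable_funM => //; exact: measurable_cst.
exact: (measurable_maxr h1 (measurable_cst (0:R))).
Qed.

Lemma strictE (R : realType) (psi : R -> R) :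
  strict_gen psi <-> (forall z, 0 <= z -> psi z != 0).
Proof.
rewrite /strict_gen; split.
- move=> H z z0; apply/eqP => pz.
  have : (Defs.pinv psi 0 <= z%:E)%E.
    by apply: ereal_inf_lbound; left; exists z.
  by rewrite H.
- move=> H; apply/eqP; rewrite eq_le leey /= /pinv.
  apply: le_ereal_inf_tmp => _ [[x [x0 px] <-]|[u _ <-]] //.
  by move: (H x x0); rewrite px eqxx.
Qed.

Lemma L1 (R : realType) (gamma : probability R R) (n : nat) (r : R) :
  (0 < n)%N -> 0 < r -> gamma [set` `[0%R, r[] = 0%E ->
  (\int[gamma]_(t in [set` `[0%R, +oo[]) (Num.max (1 - t * r^-1) 0 ^+ n)%:E = 0)%E.
Proof.
move=> n0 r0 g0; apply/eqP; rewrite eq_le integral_ge0 ?andbT; last first.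
  by move=> t _; rewrite lee_fin exprn_ge0 // le_max lexx orbT.
apply: (@le_trans _ _ (\int[gamma]_(t in [set` `[0%R, +oo[]) (\1_[set` `[0%R, r[] t)%:E)%E).
  apply: ge0_le_integral => //.
  - by move=> t _; rewrite lee_fin exprn_ge0 // le_max lexx orbT.
  - exact: mF.
  - by by apply/measurable_EFinP; apply: measurable_indic; exact: measurable_itv.
  - move=> t; rewrite /= in_itv /= andbT => t0.
    rewrite lee_fin indicE.
    have [tr|rt] := ltP t r.
      have -> : t \in [set` `[0%R, r[] by rewrite inE /= in_itv /= t0 tr.
      apply: exprn_ile1; first by rewrite le_max lexx orbT.
      rewrite ge_max ler01 andbT lerBlDr lerDl mulr_ge0 // invr_ge0 ltW //.
    have -> : Num.max (1 - t * r^-1) 0 = 0.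
      apply/max_idPr; rewrite subr_le0 ler_pdivlMr // mul1r //.
    by rewrite expr0n; case: n n0 => //= n _; case: (_ \in _).
rewrite (integral_indic _ (measurable_itv _) (measurable_itv _)).
by rewrite -g0; apply: measureIl.
Qed.

Lemma L2 (R : realType) (gamma : probability R R) (n : nat) (z : R) :
  0 < z -> (0 < gamma [set` `[0%R, ((2 * z)^-1)%R[])%E ->
  (0 < \int[gamma]_(t in [set` `[0%R, +oo[]) (Num.max (1 - t * z) 0 ^+ n)%:E)%E.
Proof.
move=> z0 g0.
set A := [set` `[0%R, (2 * z)^-1[].
have mA : measurable A by exact: measurable_itv.
apply: (@lt_le_trans _ _ (\int[gamma]_(t in [set` `[0%R, +oo[]) ((2^-1) ^+ n * \1_A t)%:E)%E).
  rewrite (integralZl_indic (measurable_itv _) (fun k : R => A)) //; last first.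
    by move=> k0; exfalso; move: k0; apply/negP; rewrite -leNgt exprn_ge0 // invr_ge0.
  rewrite (integral_indic _ (measurable_itv _) mA) setIidl; last first.
    by move=> t; rewrite /A /= !in_itv /= => /andP[-> _].
  by apply: mule_gt0 => //; rewrite lte_fin exprn_gt0 // invr_gt0.
apply: ge0_le_integral => //.
- apply/measurable_EFinP; apply: measurable_funM; first exact: measurable_cst.
  exact: measurable_indic.
- exact: mF.
move=> t; rewrite /= in_itv /= andbT => t0.
rewrite lee_fin indicE.
case: (boolP (t \in A)) => tA; last by rewrite mulr0 exprn_ge0 // le_max lexx orbT.
rewrite mulr1; apply: lerXn2r; rewrite ?nnegrE ?invr_ge0 // ?le_max ?lexx ?orbT //.
move: tA; rewrite inE /A /= in_itv /= => /andP[_ ta].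
apply/orP; left.
have : t * z < 2^-1.
  have -> : (2:R)^-1 = (2 * z)^-1 * z by field; rewrite gt_eqF.
  by rewrite ltr_pM2r.
lra.
Qed.

Theorem lemma5p4 (R : realType) (d : nat) (psi : R -> R)
    (gamma : probability R R) :
  (3 <= d)%N -> arch_copula d psi -> williamson_measure d psi gamma ->
  (strict_gen psi <-> (forall r : R, 0 < r -> (0 < gamma [set` `[0%R, r[])%E)).
Proof.
move=> d3 [[[_ _ psi0 _] _] _] [_ _ W].
have n0 : (0 < d - 1)%N by rewrite subn_gt0 (leq_trans _ d3).
rewrite strictE; split.
- move=> H r r0; rewrite lt_neqAle measure_ge0 andbT eq_sym; apply/eqP => g0.
  have ri : 0 < r^-1 by rewrite invr_gt0.
  have := W (r^-1) ri; rewrite (@L1 _ gamma _ _ n0 r0 g0) => /eqP.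
  rewrite eqe => /eqP pr.
  by move: (H _ (ltW ri)); rewrite pr eqxx.
- move=> H z; rewrite le_eqVlt => /orP[/eqP <-|z0]; first by rewrite psi0 oner_neq0.
  have zi : 0 < (2 * z)^-1 by rewrite invr_gt0 mulr_gt0.
  have := W z z0; have := @L2 _ gamma (d - 1) z z0 (H _ zi).
  by move=> h e; rewrite -e lte_fin in h; rewrite gt_eqF.
Qed.
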